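(* Let $(Z,Z_{ac})$ be an accretive matrix-ordered vector space and let $V=\operatorname{span}_{\mathbb{C}}Z_{sa}^1$. Then for each $n$: (i) $\operatorname{span}_{\mathbb{C}}Z_{sa}^n=M_n(V)$, and there exists a unique conjugate-linear involution $*$ on $M_n(V)$ such that $z^*=z$ for every $z\in Z_{sa}^n$; (ii) if $z=[z_{kl}]\in M_n(V)$ then $z^*=[z_{lk}^*]$ (the transpose of the entrywise adjoint, with $*$ on $V=M_1(V)$ from (i)); (iii) for $z\in M_n(V)$, $z\in Z_{ac}^n$ if and only if $\operatorname{Re}(z):=\frac12(z+z^* )\in Z_+^n$; (iv) each $Z_+^n$ is proper, i.e. $Z_+^n\cap-Z_+^n=\{0\}$.
   Context: For a complex vector space $Z$, $M_n(Z)$ is the $n\times n$ matrices over $Z$. A cone is a set $C$ with $C+C\subseteq C$, $tC\subseteq C$ ($t\ge0$); a matrix cone is a sequence of cones $C_n\subseteq M_n(Z)$ with $X^*C_nX\subseteq C_k$ for all scalar $X\in M_{n,k}$; it is $\mathbb{C}$-proper if $C_1\cap-C_1\cap iC_1\cap-iC_1=\{0\}$, and then $(Z,Z_{ac})$, $Z_{ac}=\{Z_{ac}^n\}$, is an accretive matrix-ordered vector space. Set $Z_{sa}^n=iZ_{ac}^n\cap-iZ_{ac}^n$ and $Z_+^n=Z_{sa}^n\cap Z_{ac}^n$. *)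

(* Defs.v *)
From HB Require Import structures.
From mathcomp Require Import all_boot all_order all_algebra.
Set Implicit Arguments. Unset Strict Implicit. Unset Printing Implicit Defensive.
Import Order.TTheory GRing.Theory Num.Theory.
Local Open Scope ring_scope.

Section Defs.
Variables (K : numClosedFieldType) (Z : lmodType K).

Definition mscale m n (a : K) (z : 'M[Z]_(m, n)) : 'M[Z]_(m, n) := map_mx ( *:%R a) z.

Definition scset n (a : K) (S : 'M[Z]_n -> Prop) : 'M[Z]_n -> Prop :=
  fun z => exists w, S w /\ z = mscale a w.

Definition is_cone n (S : 'M[Z]_n -> Prop) : Prop :=
  (forall x y, S x -> S y -> S (x + y)) /\
  (forall (t : K) x, 0 <= t -> S x -> S (mscale t x)).

(* X^* z X for a scalar matrix X in M_{n,k} and z in M_n(Z) *)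
Definition cmul n k (X : 'M[K]_(n, k)) (z : 'M[Z]_n) : 'M[Z]_k :=
  \matrix_(i < k, j < k) \sum_(p < n) \sum_(q < n) (((X p i)^* * X q j) *: z p q).

Definition is_matrix_cone (C : forall n, 'M[Z]_n -> Prop) : Prop :=
  (forall n, (0 < n)%N -> is_cone (C n)) /\
  (forall n k (X : 'M[K]_(n, k)) z, (0 < n)%N -> (0 < k)%N ->
     C n z -> C k (cmul X z)).

Definition C_proper (C : forall n, 'M[Z]_n -> Prop) : Prop :=
  forall z, C 1%N z -> scset (-1) (C 1%N) z -> scset 'i (C 1%N) z ->
            scset (- 'i) (C 1%N) z -> z = 0.

Definition accretive_mos (Zac : forall n, 'M[Z]_n -> Prop) : Prop :=
  is_matrix_cone Zac /\ C_proper Zac.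

Definition Zsa (Zac : forall n, 'M[Z]_n -> Prop) n : 'M[Z]_n -> Prop :=
  fun z => scset 'i (Zac n) z /\ scset (- 'i) (Zac n) z.

Definition Zplus (Zac : forall n, 'M[Z]_n -> Prop) n : 'M[Z]_n -> Prop :=
  fun z => Zsa Zac z /\ Zac n z.

Definition cspan n (S : 'M[Z]_n -> Prop) : 'M[Z]_n -> Prop :=
  fun z => exists s : seq (K * 'M[Z]_n),
    (forall p, p \in s -> S p.2) /\ z = \sum_(p <- s) mscale p.1 p.2.

(* V = span Z_sa^1, viewed inside Z = M_1(Z) *)
Definition Vsp (Zac : forall n, 'M[Z]_n -> Prop) : Z -> Prop :=
  fun v => cspan (Zsa Zac (n := 1%N)) (const_mx v).

Definition MnV (Zac : forall n, 'M[Z]_n -> Prop) n : 'M[Z]_n -> Prop :=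
  fun z => forall i j, Vsp Zac (z i j).

Definition is_star (Zac : forall n, 'M[Z]_n -> Prop) n (f : 'M[Z]_n -> 'M[Z]_n) : Prop :=
  [/\ (forall z, MnV Zac z -> MnV Zac (f z)),
      (forall (a : K) z w, MnV Zac z -> MnV Zac w -> f (mscale a z + w) = mscale a^* (f z) + f w),
      (forall z, MnV Zac z -> f (f z) = z)
    & (forall z, Zsa Zac z -> f z = z)].

Definition vadj (g : 'M[Z]_1 -> 'M[Z]_1) (v : Z) : Z := g (const_mx v) ord0 ord0.

Definition mxRe n (f : 'M[Z]_n -> 'M[Z]_n) (z : 'M[Z]_n) : 'M[Z]_n :=
  mscale 2^-1 (z + f z).

End Defs.

(* Main.v *)
Require Import Defs.
From HB Require Import structures.
From mathcomp Require Import all_boot all_order all_algebra.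
From mathcomp Require Import ring.
From Stdlib Require Import ClassicalEpsilon.
Import Order.TTheory GRing.Theory Num.Theory.
Local Open Scope ring_scope.
Set Implicit Arguments. Unset Strict Implicit.

Section Gen.
Variables (K : numClosedFieldType) (Z : lmodType K).

Lemma mscaleE m n a (z : 'M[Z]_(m,n)) i j : mscale a z i j = a *: z i j.
Proof. by rewrite /mscale mxE. Qed.

Lemma mscaleD m n a (x y : 'M[Z]_(m,n)) : mscale a (x + y) = mscale a x + mscale a y.
Proof. by apply/matrixP=> i j; rewrite !mxE scalerDr. Qed.
Lemma mscaleDl m n a b (x : 'M[Z]_(m,n)) : mscale (a + b) x = mscale a x + mscale b x.
Proof. by apply/matrixP=> i j; rewrite !mxE scalerDl. Qed.
Lemma mscaleA m n a b (x : 'M[Z]_(m,n)) : mscale a (mscale b x) = mscale (a * b) x.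
Proof. by apply/matrixP=> i j; rewrite !mxE scalerA. Qed.
Lemma mscale1 m n (x : 'M[Z]_(m,n)) : mscale 1 x = x.
Proof. by apply/matrixP=> i j; rewrite !mxE scale1r. Qed.
Lemma mscale0 m n (x : 'M[Z]_(m,n)) : mscale 0 x = 0.
Proof. by apply/matrixP=> i j; rewrite !mxE scale0r. Qed.
Lemma mscalex0 m n a : mscale a (0 : 'M[Z]_(m,n)) = 0.
Proof. by apply/matrixP=> i j; rewrite !mxE scaler0. Qed.
Lemma mscaleN1 m n (x : 'M[Z]_(m,n)) : mscale (-1) x = - x.
Proof. by apply/matrixP=> i j; rewrite !mxE scaleN1r. Qed.
Lemma mscaleN m n a (x : 'M[Z]_(m,n)) : mscale a (- x) = - mscale a x.
Proof. by apply/matrixP=> i j; rewrite !mxE scalerN. Qed.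
Lemma mscaleNl m n a (x : 'M[Z]_(m,n)) : mscale (- a) x = - mscale a x.
Proof. by apply/matrixP=> i j; rewrite !mxE scaleNr. Qed.

Lemma mulii : ('i : K) * 'i = -1. Proof. exact: mulCii. Qed.
Lemma mulNii : (- 'i : K) * 'i = 1. Proof. by rewrite mulNr mulii opprK. Qed.
Lemma muliNi : ('i : K) * (- 'i) = 1. Proof. by rewrite mulrN mulii opprK. Qed.

Lemma scsetE n a b (S : 'M[Z]_n -> Prop) z : a * b = 1 ->
  (scset a S z <-> S (mscale b z)).
Proof.
move=> ab; split.
  by case=> w [Sw ->]; rewrite mscaleA mulrC ab mscale1.
by move=> Sz; exists (mscale b z); split=> //; rewrite mscaleA ab mscale1.
Qed.

Lemma cspan0 n (S : 'M[Z]_n -> Prop) : cspan S 0.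
Proof. by exists [::]; split=> //; rewrite big_nil. Qed.
Lemma cspanD n (S : 'M[Z]_n -> Prop) x y : cspan S x -> cspan S y -> cspan S (x + y).
Proof.
move=> [s [hs ->]] [t [ht ->]]; exists (s ++ t); split; last by rewrite big_cat.
move=> p; rewrite mem_cat => /orP[h|h]; [exact: (hs _ h)|exact: (ht _ h)].
Qed.
Lemma cspanZ n (S : 'M[Z]_n -> Prop) a x : cspan S x -> cspan S (mscale a x).
Proof.
move=> [s [hs ->]]; exists [seq (a * p.1, p.2) | p <- s]; split.
  by move=> p /mapP[q qs ->] /=; exact: (hs _ qs).
elim: s {hs} => [|p s IH]; first by rewrite !big_nil mscalex0.
by rewrite !big_cons mscaleD IH mscaleA.
Qed.
Lemma cspan1 n (S : 'M[Z]_n -> Prop) x : S x -> cspan S x.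
Proof. by move=> Sx; exists [:: (1, x)]; split=> [p|]; rewrite ?inE ?big_seq1 ?mscale1 // => /eqP->. Qed.
Lemma cspan_sum n (S : 'M[Z]_n -> Prop) I (r : seq I) (P : pred I) F :
  (forall i, P i -> cspan S (F i)) -> cspan S (\sum_(i <- r | P i) F i).
Proof. move=> h; apply: big_ind => //; [exact: cspan0|exact: cspanD]. Qed.

End Gen.



Section Gen2.
Variables (K : numClosedFieldType) (Z : lmodType K).

Definition cs : seq K := [:: 1; -1; 'i; -'i].

Lemma polar_gen (w : K -> K) (A B C D : Z) :
  \sum_(c <- cs) w c *: (A + c *: B + c^* *: C + (c^* * c) *: D) =
  (\sum_(c <- cs) w c) *: A + (\sum_(c <- cs) w c * c) *: B
  + (\sum_(c <- cs) w c * c^*) *: C + (\sum_(c <- cs) w c * (c^* * c)) *: D.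
Proof.
under eq_bigr => c _ do rewrite !scalerDr !scalerA.
by rewrite !big_split /= -!scaler_suml.
Qed.

Lemma four_neq0 : (4 : K) != 0. Proof. by rewrite pnatr_eq0. Qed.

Lemma conjCNi : (- 'i)^* = 'i :> K.
Proof. by rewrite -conjCi conjCK. Qed.

Ltac csum := rewrite /cs !big_cons big_nil /= ?conjC1 ?conjCN1 ?conjCi ?conjCNi.

Lemma polarB (A B C D : Z) :
  \sum_(c <- cs) (c^* / 4) *: (A + c *: B + c^* *: C + (c^* * c) *: D) = B.
Proof.
have h := @mulii K; have h4 := four_neq0.
have e1 : \sum_(c <- cs) c^* / 4 = 0 :> K by csum; field.
have e2 : \sum_(c <- cs) c^* / 4 * c = 1 :> K by csum; field: h.
have e3 : \sum_(c <- cs) c^* / 4 * c^* = 0 :> K by csum; field: h.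
have e4 : \sum_(c <- cs) c^* / 4 * (c^* * c) = 0 :> K by csum; field: h.
by rewrite polar_gen e1 e2 e3 e4 !scale0r scale1r !add0r !addr0.
Qed.

Lemma polarC (A B C D : Z) :
  \sum_(c <- cs) (c / 4) *: (A + c *: B + c^* *: C + (c^* * c) *: D) = C.
Proof.
have h := @mulii K; have h4 := four_neq0.
have e1 : \sum_(c <- cs) c / 4 = 0 :> K by csum; field.
have e2 : \sum_(c <- cs) c / 4 * c = 0 :> K by csum; field: h.
have e3 : \sum_(c <- cs) c / 4 * c^* = 1 :> K by csum; field: h.
have e4 : \sum_(c <- cs) c / 4 * (c^* * c) = 0 :> K by csum; field: h.
by rewrite polar_gen e1 e2 e3 e4 !scale0r scale1r !add0r !addr0.
Qed.

End Gen2.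



Section Gen3.
Variables (K : numClosedFieldType) (Z : lmodType K).

Definition colv n (k l : 'I_n) (c : K) : 'M[K]_(n,1) :=
  \matrix_(p, j) ((p == k)%:R + c * (p == l)%:R).
Definition rowv n (k l : 'I_n) (c : K) : 'M[K]_(1,n) :=
  \matrix_(j, p) ((p == k)%:R + c * (p == l)%:R).
Definition Emx n (k l : 'I_n) (v : Z) : 'M[Z]_n :=
  \matrix_(i, j) (((i == k)%:R * (j == l)%:R : K) *: v).

Lemma dsum n (F : 'I_n -> 'I_n -> Z) u v (a : K) :
  \sum_p \sum_q (((p == u)%:R * (q == v)%:R) * a) *: F p q = a *: F u v.
Proof.
rewrite (bigD1 u) //= [X in _ + X]big1 ?addr0; last first.
  move=> p pu; apply: big1 => q _; by rewrite (negbTE pu) !mul0r scale0r.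
rewrite (bigD1 v) //= [X in _ + X]big1 ?addr0 ?eqxx ?mul1r //.
by move=> q qv; rewrite (negbTE qv) mulr0 mul0r scale0r.
Qed.

Lemma cmul_col n (z : 'M[Z]_n) k l c i j :
  cmul (colv k l c) z i j = z k k + c *: z k l + c^* *: z l k + (c^* * c) *: z l l.
Proof.
rewrite mxE.
transitivity (\sum_(p < n) \sum_(q < n)
   ((((p==k)%:R*(q==k)%:R)*1) *: z p q
   + (((p==k)%:R*(q==l)%:R)*c) *: z p q + (((p==l)%:R*(q==k)%:R)*c^*) *: z p q
   + (((p==l)%:R*(q==l)%:R)*(c^* * c)) *: z p q)).
  apply: eq_bigr => p _; apply: eq_bigr => q _; rewrite !mxE -!scalerDl; congr (_ *: _).
  rewrite rmorphD rmorphM !rmorph_nat. ring.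
under eq_bigr do rewrite !big_split /=.
by rewrite !big_split /= !dsum scale1r.
Qed.

Lemma cmul_row n (w : 'M[Z]_1) (k l : 'I_n) c i j :
  cmul (rowv k l c) w i j = ((i==k)%:R*(j==k)%:R) *: w 0 0
   + c *: (((i==k)%:R*(j==l)%:R) *: w 0 0) + c^* *: (((i==l)%:R*(j==k)%:R) *: w 0 0)
   + (c^* * c) *: (((i==l)%:R*(j==l)%:R) *: w 0 0).
Proof.
rewrite mxE !big_ord1 !mxE !scalerA -!scalerDl; congr (_ *: _).
rewrite rmorphD rmorphM !rmorph_nat. ring.
Qed.

Lemma Emx_polar n (w : 'M[Z]_1) (k l : 'I_n) :
  Emx k l (w 0 0) = \sum_(c <- cs K) mscale (c^*/4) (cmul (rowv k l c) w).
Proof.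
apply/matrixP => i j; rewrite mxE summxE.
under eq_bigr do rewrite mscaleE cmul_row.
by rewrite polarB.
Qed.

Lemma const_polar n (z : 'M[Z]_n) k l :
  const_mx (z k l) = \sum_(c <- cs K) mscale (c^*/4) (cmul (colv k l c) z) :> 'M_1.
Proof.
apply/matrixP => i j; rewrite mxE summxE.
under eq_bigr do rewrite mscaleE cmul_col.
by rewrite polarB.
Qed.

Lemma mx_Emx n (z : 'M[Z]_n) : z = \sum_k \sum_l Emx k l (z k l).
Proof.
apply/matrixP => i j; rewrite summxE.
under eq_bigr do rewrite summxE.
under eq_bigr do under eq_bigr do rewrite mxE (eq_sym i) (eq_sym j) -[_ * _]mulr1.
by rewrite dsum scale1r.
Qed.

End Gen3.



Section Main.
Variables (K : numClosedFieldType) (Z : lmodType K).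

Lemma cmulZ n k (X : 'M[K]_(n,k)) a (z : 'M[Z]_n) :
  cmul X (mscale a z) = mscale a (cmul X z).
Proof.
apply/matrixP => i j; rewrite !mxE scaler_sumr; apply: eq_bigr => p _.
rewrite scaler_sumr; apply: eq_bigr => q _; by rewrite mxE !scalerA mulrC.
Qed.

Lemma const00 (u : 'M[Z]_1) : const_mx (u 0 0) = u.
Proof. by apply/matrixP => i j; rewrite mxE !ord1. Qed.

Lemma constD (u v : Z) : const_mx (u + v) = const_mx u + const_mx v :> 'M_1.
Proof. by apply/matrixP => i j; rewrite !mxE. Qed.
Lemma constZ a (u : Z) : const_mx (a *: u) = mscale a (const_mx u) :> 'M_1.
Proof. by apply/matrixP => i j; rewrite !mxE. Qed.
Lemma const0 : const_mx 0 = 0 :> 'M[Z]_1.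
Proof. by apply/matrixP => i j; rewrite !mxE. Qed.

Unset Implicit Arguments.
Variable (Zac : forall n, 'M[Z]_n -> Prop) (hZ : accretive_mos Zac).
Set Implicit Arguments.

Lemma cone_add n x y : (0 < n)%N -> Zac n x -> Zac n y -> Zac n (x + y).
Proof. by move=> hn; case: hZ => [[hc _] _]; case: (hc n hn) => h _; apply: h. Qed.
Lemma cone_scale n t x : (0 < n)%N -> 0 <= t -> Zac n x -> Zac n (mscale t x).
Proof. by move=> hn; case: hZ => [[hc _] _]; case: (hc n hn) => _ h; apply: h. Qed.
Lemma cone_cmul n k (X : 'M[K]_(n,k)) z : (0 < n)%N -> (0 < k)%N -> Zac n z -> Zac k (cmul X z).
Proof. by case: hZ => [[_ hc] _]; apply: hc. Qed.

Lemma ZsaE n (z : 'M[Z]_n) : Zsa Zac z <-> Zac n (mscale (-'i) z) /\ Zac n (mscale 'i z).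
Proof.
have e1 := scsetE (Zac n) z (@muliNi K).
have e2 := scsetE (Zac n) z (@mulNii K).
rewrite /Zsa; tauto.
Qed.

Lemma proper_n n (z : 'M[Z]_n) : (0 < n)%N -> Zac n z -> Zac n (mscale (-1) z) ->
  Zac n (mscale (-'i) z) -> Zac n (mscale 'i z) -> z = 0.
Proof.
move=> hn h1 h2 h3 h4.
have hw : forall X : 'M[K]_(n,1), cmul X z = 0.
  move=> X; case: hZ => _ hp; apply: hp.
  - exact: cone_cmul.
  - apply/(scsetE _ _ (b := -1)); first by rewrite mulrNN mulr1.
    by rewrite -cmulZ; apply: cone_cmul.
  - apply/(scsetE _ _ (@muliNi K)).
    by rewrite -cmulZ; apply: cone_cmul.
  - apply/(scsetE _ _ (@mulNii K)).
    by rewrite -cmulZ; apply: cone_cmul.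
apply/matrixP => k l; rewrite mxE.
have := const_polar z k l.
under eq_bigr do rewrite hw mscalex0.
rewrite big1_eq => /matrixP/(_ ord0 ord0).
by rewrite !mxE.
Qed.

Definition Rr n (x : 'M[Z]_n) := x = 0 \/ Zsa Zac x.

Lemma Zsa_add n (x y : 'M[Z]_n) : (0 < n)%N -> Zsa Zac x -> Zsa Zac y -> Zsa Zac (x + y).
Proof.
move=> hn /ZsaE[a1 a2] /ZsaE[b1 b2]; apply/ZsaE.
by rewrite !mscaleD; split; apply: cone_add.
Qed.

Lemma Zsa_scale n t (x : 'M[Z]_n) : (0 < n)%N -> 0 <= t -> Zsa Zac x -> Zsa Zac (mscale t x).
Proof.
move=> hn ht /ZsaE[a1 a2]; apply/ZsaE.
rewrite !mscaleA ![_ * t]mulrC -!mscaleA; split; exact: cone_scale.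
Qed.

Lemma Zsa_opp n (x : 'M[Z]_n) : Zsa Zac x -> Zsa Zac (mscale (-1) x).
Proof.
move=> /ZsaE[a1 a2]; apply/ZsaE.
by rewrite !mscaleA mulrN1 opprK mulrN1.
Qed.

Lemma R0 n : Rr (0 : 'M[Z]_n). Proof. by left. Qed.

Lemma R_add n (x y : 'M[Z]_n) : (0 < n)%N -> Rr x -> Rr y -> Rr (x + y).
Proof.
move=> hn [->|hx] [->|hy]; rewrite ?add0r ?addr0; try by [left|right].
by right; apply: Zsa_add.
Qed.

Lemma R_real n t (x : 'M[Z]_n) : (0 < n)%N -> t \is Num.real -> Rr x -> Rr (mscale t x).
Proof.
move=> hn ht [->|hx]; first by rewrite mscalex0; left.
right; move: ht; rewrite realE => /orP[ht|ht]; first exact: Zsa_scale.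
have -> : mscale t x = mscale (- t) (mscale (-1) x) by rewrite mscaleA mulrN1 opprK.
by apply: Zsa_scale; [|rewrite oppr_ge0|apply: Zsa_opp].
Qed.

Lemma R_opp n (x : 'M[Z]_n) : (0 < n)%N -> Rr x -> Rr (- x).
Proof. by move=> hn hx; rewrite -mscaleN1; apply: R_real => //; rewrite realN real1. Qed.

Lemma cspan_dec n (z : 'M[Z]_n) : (0 < n)%N -> cspan (Zsa Zac (n := n)) z ->
  exists x y, Rr x /\ Rr y /\ z = x + mscale 'i y.
Proof.
move=> hn [s [hs ->]]; elim: s hs => [|[a w] s IH] hs.
  by exists 0, 0; rewrite big_nil mscalex0 addr0; split; [left|split; [left|]].
have hw : Zsa Zac w by apply: (hs (a, w)); rewrite inE eqxx.
rewrite big_cons /=.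
have [|x [y [Rx [Ry ->]]]] := IH.
  by move=> p ps; apply: hs; rewrite inE ps orbT.
exists (mscale ('Re a) w + x), (mscale ('Im a) w + y); split; last split.
- by apply: R_add => //; apply: R_real => //; right.
- by apply: R_add => //; apply: R_real => //; right.
rewrite {1}(Crect a) mscaleDl -mscaleA mscaleD.
by rewrite addrACA.
Qed.

Lemma RiR n (u v : 'M[Z]_n) : (0 < n)%N -> Rr u -> Rr v -> u = mscale 'i v -> v = 0.
Proof.
move=> hn Ru [->//|hv] e.
have [a1 a2] := (ZsaE v).1 hv.
case: Ru => [u0|hu].
  by rewrite -[v]mscale1 -(@mulNii K) -mscaleA -e u0 mscalex0.
have [b1 b2] := (ZsaE u).1 hu.
move: b1 b2; rewrite e !mscaleA mulNii mulii mscale1 => b1 b2.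
exact: proper_n.
Qed.

Lemma dec_uniq n (x y x' y' : 'M[Z]_n) : (0 < n)%N -> Rr x -> Rr y -> Rr x' -> Rr y' ->
  x + mscale 'i y = x' + mscale 'i y' -> x = x' /\ y = y'.
Proof.
move=> hn Rx Ry Rx' Ry' e.
have e2 : x - x' = mscale 'i (y' - y).
  rewrite mscaleD mscaleN -(addrK (mscale 'i y) x) e.
  by rewrite addrAC [x' + _ - x']addrAC subrr add0r.
have v0 := RiR hn (R_add hn Rx (R_opp hn Rx')) (R_add hn Ry' (R_opp hn Ry)) e2.
move: e2; rewrite v0 mscalex0 => /eqP; rewrite subr_eq0 => /eqP ->.
by split=> //; apply/eqP; rewrite eq_sym -subr_eq0 v0.
Qed.

Lemma Zsa_cmul n k (X : 'M[K]_(n,k)) (z : 'M[Z]_n) : (0 < n)%N -> (0 < k)%N ->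
  Zsa Zac z -> Zsa Zac (cmul X z).
Proof.
move=> hn hk /ZsaE[a1 a2]; apply/ZsaE; rewrite -!cmulZ.
by split; apply: cone_cmul.
Qed.

Lemma Vsp0 : Vsp Zac 0. Proof. by rewrite /Vsp const0; apply: cspan0. Qed.
Lemma VspD u v : Vsp Zac u -> Vsp Zac v -> Vsp Zac (u + v).
Proof. by rewrite /Vsp constD; apply: cspanD. Qed.
Lemma VspZ a u : Vsp Zac u -> Vsp Zac (a *: u).
Proof. by rewrite /Vsp constZ; apply: cspanZ. Qed.

Lemma MnV0 n : MnV Zac (0 : 'M[Z]_n).
Proof. by move=> i j; rewrite mxE; apply: Vsp0. Qed.
Lemma MnVD n (x y : 'M[Z]_n) : MnV Zac x -> MnV Zac y -> MnV Zac (x + y).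
Proof. by move=> hx hy i j; rewrite mxE; apply: VspD. Qed.
Lemma MnVZ n a (x : 'M[Z]_n) : MnV Zac x -> MnV Zac (mscale a x).
Proof. by move=> hx i j; rewrite mxE; apply: VspZ. Qed.
Lemma MnVN n (x : 'M[Z]_n) : MnV Zac x -> MnV Zac (- x).
Proof. by move=> hx; rewrite -mscaleN1; apply: MnVZ. Qed.
Lemma MnV_sum n I (r : seq I) (P : pred I) (F : I -> 'M[Z]_n) :
  (forall i, P i -> MnV Zac (F i)) -> MnV Zac (\sum_(i <- r | P i) F i).
Proof. move=> h; apply: big_ind => //; [exact: MnV0|exact: MnVD]. Qed.

Lemma Zsa_MnV n (z : 'M[Z]_n) : (0 < n)%N -> Zsa Zac z -> MnV Zac z.
Proof.
move=> hn hz k l; rewrite /Vsp const_polar; apply: cspan_sum => c _.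
by apply: cspanZ; apply: cspan1; apply: Zsa_cmul.
Qed.

Lemma R_MnV n (z : 'M[Z]_n) : (0 < n)%N -> Rr z -> MnV Zac z.
Proof. by move=> hn [->|h]; [apply: MnV0|apply: Zsa_MnV]. Qed.

Lemma cspan_MnV n (z : 'M[Z]_n) : (0 < n)%N -> cspan (Zsa Zac (n := n)) z -> MnV Zac z.
Proof.
move=> hn [s [hs ->]]; rewrite big_seq; apply: MnV_sum => p ps.
by apply: MnVZ; apply: Zsa_MnV => //; apply: hs.
Qed.

Lemma Emx_sum n (k l : 'I_n) (s : seq (K * 'M[Z]_1)) :
  Emx k l (\sum_(p <- s) p.1 *: p.2 0 0) = \sum_(p <- s) mscale p.1 (Emx k l (p.2 0 0)).
Proof.
apply/matrixP => i j; rewrite mxE summxE scaler_sumr; apply: eq_bigr => p _.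
by rewrite !mxE !scalerA mulrC.
Qed.

Lemma MnV_cspan n (z : 'M[Z]_n) : (0 < n)%N -> MnV Zac z -> cspan (Zsa Zac (n := n)) z.
Proof.
move=> hn hz; rewrite (mx_Emx z); apply: cspan_sum => k _; apply: cspan_sum => l _.
have [s [hs e]] := hz k l.
have -> : z k l = \sum_(p <- s) p.1 *: p.2 0 0.
  have := congr1 (fun m : 'M[Z]_1 => m 0 0) e; rewrite /= mxE summxE => ->.
  by apply: eq_bigr => p _; rewrite mscaleE.
rewrite Emx_sum big_seq; apply: cspan_sum => p ps; apply: cspanZ.
rewrite Emx_polar; apply: cspan_sum => c _; apply: cspanZ; apply: cspan1.
by apply: Zsa_cmul => //; apply: hs.
Qed.

Lemma MnV_dec n (z : 'M[Z]_n) : (0 < n)%N -> MnV Zac z ->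
  exists x y, Rr x /\ Rr y /\ z = x + mscale 'i y.
Proof. by move=> hn hz; apply: cspan_dec => //; apply: MnV_cspan. Qed.

Lemma Dadd n (x y x' y' : 'M[Z]_n) :
  (x + mscale 'i y) + (x' + mscale 'i y') = (x + x') + mscale 'i (y + y').
Proof. by rewrite mscaleD addrACA. Qed.

Lemma DZ n a b (x y : 'M[Z]_n) :
  mscale (a + 'i * b) (x + mscale 'i y) =
  (mscale a x - mscale b y) + mscale 'i (mscale a y + mscale b x).
Proof.
rewrite mscaleDl !mscaleD !mscaleA (mulrC a) [_ * b * _]mulrAC mulii mulN1r mscaleNl.
by rewrite [mscale ('i * b) x + _]addrC addrACA.
Qed.

Lemma star0 n (f : 'M[Z]_n -> 'M[Z]_n) : is_star Zac f -> f 0 = 0.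
Proof.
case=> _ hl _ _; have := hl (-1) 0 0 (@MnV0 n) (@MnV0 n).
by rewrite mscalex0 addr0 conjCN1 mscaleN1 addNr.
Qed.

Lemma star_R n (f : 'M[Z]_n -> 'M[Z]_n) x : is_star Zac f -> Rr x -> f x = x.
Proof. by move=> hf [->|hx]; [apply: star0|case: hf => _ _ _; apply]. Qed.

Lemma star_dec n (f : 'M[Z]_n -> 'M[Z]_n) x y : (0 < n)%N -> is_star Zac f -> Rr x -> Rr y ->
  f (x + mscale 'i y) = x + mscale (- 'i) y.
Proof.
move=> hn hf Rx Ry; have hf' := hf; case: hf' => _ hl _ _.
rewrite addrC hl ?conjCi; try exact: R_MnV.
by rewrite !(star_R hf) // addrC.
Qed.

Lemma star_uniq n (f g : 'M[Z]_n -> 'M[Z]_n) : (0 < n)%N -> is_star Zac f -> is_star Zac g ->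
  forall z, MnV Zac z -> f z = g z.
Proof.
move=> hn hf hg z hz; have [x [y [Rx [Ry ->]]]] := MnV_dec hn hz.
by rewrite !star_dec.
Qed.

Definition decp n (z : 'M[Z]_n) : 'M[Z]_n * 'M[Z]_n :=
  epsilon (inhabits (0, 0)) (fun p => Rr p.1 /\ Rr p.2 /\ z = p.1 + mscale 'i p.2).
Definition f0 n (z : 'M[Z]_n) := (decp z).1 + mscale (-'i) (decp z).2.

Lemma f0E n (x y : 'M[Z]_n) : (0 < n)%N -> Rr x -> Rr y ->
  f0 (x + mscale 'i y) = x + mscale (-'i) y.
Proof.
move=> hn Rx Ry; rewrite /f0 /decp.
have ex : exists p : 'M[Z]_n * 'M[Z]_n,
    Rr p.1 /\ Rr p.2 /\ x + mscale 'i y = p.1 + mscale 'i p.2.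
  by exists (x, y).
have [h1 [h2 h3]] := epsilon_spec (inhabits (0, 0)) _ ex.
by have [-> ->] := dec_uniq hn h1 h2 Rx Ry (esym h3).
Qed.

Lemma mNi n (y : 'M[Z]_n) : mscale (-'i) y = mscale 'i (- y).
Proof. by rewrite mscaleNl mscaleN. Qed.

Lemma Rlin n a b (x y : 'M[Z]_n) : (0 < n)%N -> a \is Num.real -> b \is Num.real ->
  Rr x -> Rr y -> Rr (mscale a x + mscale b y).
Proof. by move=> hn ha hb Rx Ry; apply: R_add => //; apply: R_real. Qed.

Lemma f0_star n : (0 < n)%N -> is_star Zac (@f0 n).
Proof.
move=> hn; split.
- move=> z hz; have [x [y [Rx [Ry ->]]]] := MnV_dec hn hz.
  rewrite f0E //; apply: MnVD; first exact: R_MnV.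
  by apply: MnVZ; apply: R_MnV.
- move=> a z w hz hw.
  have [x [y [Rx [Ry ->]]]] := MnV_dec hn hz.
  have [x' [y' [Rx' [Ry' ->]]]] := MnV_dec hn hw.
  move: (Creal_Re a) (Creal_Im a) (Crect a).
  move: ('Re a) ('Im a) => al be ra ia ->.
  rewrite DZ Dadd f0E //; last 2 first.
  + by repeat first [done | apply: R_add | apply: R_opp | apply: R_real].
  + by repeat first [done | apply: R_add | apply: R_opp | apply: R_real].
  rewrite conjC_rect // !f0E // !(@mNi n) -mulrN DZ Dadd.
  congr (_ - _ + _ + mscale 'i _); first by rewrite mscaleNl mscaleN opprK.
  by rewrite !opprD mscaleN mscaleNl.
- move=> z hz; have [x [y [Rx [Ry ->]]]] := MnV_dec hn hz.
  rewrite f0E // (@mNi n) f0E ?mscaleNl ?mscaleN ?opprK //; exact: R_opp.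
- move=> z hz; have := f0E hn (or_intror hz) (R0 n).
  by rewrite !mscalex0 !addr0.
Qed.

Lemma star_sum m (g : 'M[Z]_m -> 'M[Z]_m) I (r : seq I) (a : I -> K) (u : I -> 'M[Z]_m) :
  is_star Zac g -> (forall i, MnV Zac (u i)) ->
  g (\sum_(i <- r) mscale (a i) (u i)) = \sum_(i <- r) mscale (a i)^* (g (u i)).
Proof.
move=> hg hu; have hg' := hg; case: hg' => _ hl _ _.
elim: r => [|i r IH]; first by rewrite !big_nil (star0 hg).
rewrite !big_cons hl ?IH //; try exact: hu.
by apply: MnV_sum => j _; apply: MnVZ; apply: hu.
Qed.

Lemma MnV_const v : Vsp Zac v -> MnV Zac (const_mx v : 'M[Z]_1).
Proof. by move=> hv i j; rewrite mxE. Qed.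

Definition hstar n (g : 'M[Z]_1 -> 'M[Z]_1) (z : 'M[Z]_n) : 'M[Z]_n :=
  \matrix_(k, l) vadj g (z l k).

Lemma conj_c4 (c : K) : (c^* / 4)^* = c / 4.
Proof. by rewrite fmorph_div; change ((c^*)^* / (4:K)^* = c / 4); rewrite conjCK conjC_nat. Qed.

Lemma hstar_star n (g : 'M[Z]_1 -> 'M[Z]_1) : (0 < n)%N -> is_star Zac g ->
  is_star Zac (hstar (n := n) g).
Proof.
move=> hn hg; have hg' := hg; case: hg' => hM hl hi hf; split.
- move=> z hz k l; rewrite mxE /vadj.
  exact: (hM _ (MnV_const (hz l k)) 0 0).
- move=> a z w hz hw; apply/matrixP => k l; rewrite !mxE /vadj constD constZ.
  rewrite hl; try by apply: MnV_const.
  by rewrite !mxE.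
- move=> z hz; apply/matrixP => k l; rewrite !mxE /vadj const00 hi ?mxE //.
  exact: MnV_const.
- move=> z hz; apply/matrixP => k l; rewrite mxE /vadj.
  rewrite (const_polar z l k) (star_sum _ _ hg); last first.
    by move=> c; apply: Zsa_MnV => //; apply: Zsa_cmul.
  under eq_bigr => c _ do rewrite (star_R hg (or_intror (Zsa_cmul (colv l k c) hn isT hz))).
  rewrite summxE.
  under eq_bigr do rewrite mscaleE cmul_col conj_c4.
  by rewrite polarC.
Qed.

Lemma mxRe_dec n (f : 'M[Z]_n -> 'M[Z]_n) x y : (0 < n)%N -> is_star Zac f -> Rr x -> Rr y ->
  mxRe f (x + mscale 'i y) = x.
Proof.
move=> hn hf Rx Ry; rewrite /mxRe star_dec // (@mNi n) Dadd subrr mscalex0 addr0.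
rewrite -{1 2}[x]mscale1 -mscaleDl mscaleA.
have h2 : (2 : K) != 0 by rewrite pnatr_eq0.
have -> : (2 : K)^-1 * (1 + 1) = 1 by field.
by rewrite mscale1.
Qed.

Lemma part3 n (f : 'M[Z]_n -> 'M[Z]_n) z : (0 < n)%N -> is_star Zac f -> MnV Zac z ->
  (Zac n z <-> Zplus Zac (mxRe f z)).
Proof.
move=> hn hf hz; have [x [y [Rx [Ry ->]]]] := MnV_dec hn hz.
rewrite mxRe_dec //; split.
- move=> h; split.
  + case: Rx => [x0|//]; rewrite x0; apply/ZsaE; rewrite !mscalex0.
    by rewrite -(mscale0 (x + mscale 'i y)); split; apply: cone_scale.
  + case: Ry => [y0|hy]; first by move: h; rewrite y0 mscalex0 addr0.
    have [c1 c2] := (ZsaE y).1 hy.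
    have -> : x = x + mscale 'i y + mscale (-'i) y.
      by rewrite -addrA -mscaleDl subrr mscale0 addr0.
    exact: cone_add.
- move=> [hsa hx].
  case: Ry => [->|hy]; first by rewrite mscalex0 addr0.
  have [c1 c2] := (ZsaE y).1 hy.
  exact: cone_add.
Qed.

Lemma part4 n (z : 'M[Z]_n) : (0 < n)%N -> Zplus Zac z -> Zplus Zac (- z) -> z = 0.
Proof.
move=> hn [hsa hz] [_ hnz]; have [a1 a2] := (ZsaE z).1 hsa.
by apply: proper_n => //; rewrite mscaleN1.
Qed.

End Main.

Unset Implicit Arguments.
Theorem lemma2p6 (K : numClosedFieldType) (Z : lmodType K)
    (Zac : forall n, 'M[Z]_n -> Prop) (hZ : accretive_mos Zac)
    (n : nat) (hn : (0 < n)%N) :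
  (* (i) *)
  (forall z : 'M[Z]_n, cspan (Zsa Zac (n := n)) z <-> MnV Zac z) /\
  (exists f : 'M[Z]_n -> 'M[Z]_n, is_star Zac f) /\
  (forall f g : 'M[Z]_n -> 'M[Z]_n, is_star Zac f -> is_star Zac g ->
     forall z, MnV Zac z -> f z = g z) /\
  (* (ii) *)
  (forall (f : 'M[Z]_n -> 'M[Z]_n) (g : 'M[Z]_1 -> 'M[Z]_1),
     is_star Zac f -> is_star Zac g ->
     forall z, MnV Zac z -> f z = \matrix_(k < n, l < n) vadj g (z l k)) /\
  (* (iii) *)
  (forall f : 'M[Z]_n -> 'M[Z]_n, is_star Zac f ->
     forall z, MnV Zac z -> (Zac n z <-> Zplus Zac (mxRe f z))) /\
  (* (iv) *)
  (forall z : 'M[Z]_n, Zplus Zac z -> Zplus Zac (- z) -> z = 0).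
Proof.
split; first by move=> z; split; [apply: cspan_MnV|apply: MnV_cspan].
split; first by exists (@f0 K Z Zac n); apply: f0_star.
split; first by move=> f g hf hg; apply: star_uniq.
split.
  move=> f g hf hg z hz.
  exact: (star_uniq hZ hn hf (hstar_star hZ hn hg) hz).
split; first by move=> f hf z hz; apply: part3.
by move=> z; apply: part4.
Qed.
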